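(* The Price by Removal Mechanism is budget balanced, and it assigns all the users of $\bigcup_{m\in M}\hat P(m)$.
   Context: Model: finite sets of users $P$ (costs $c(p)\ge0$), mediators $M$ (the sets $P(m)$ partition $P$), advertisers $A$ (public capacity $u(a)$, a positive integer, and value $v(a)\ge0$); each advertiser $a$ has $u(a)$ slots each of value $v(a)$; $B$ is the set of all slots. $\gamma\ge1$ satisfies $u(a)\le\gamma$ and $|P(m)|\le\gamma$ for all $a,m$. Costs/values are compared using a fixed tie-breaking rule making them all distinct. Canonical assignment $S_c(P',B')$: order slots of $B'$ by decreasing value $b_1,b_2,\dots$ and users of $P'$ by increasing cost $p_1,p_2,\dots$; include $(p_i,b_i)$ for $i\le\min\{|P'|,|B'|\}$ iff $v(b_i)>c(p_i)$; the user at location $i$ is $p_i$. Budget balanced means the total amount charged to advertisers is at least the total amount paid to mediators. Price by Removal Mechanism (on the reported data): (1) for each mediator $m$, if $|S_c(P\setminus P(m),B)|>4\gamma$, let $p_m$ be the user at location $|S_c(P\setminus P(m),B)|-4\gamma$ of $S_c(P\setminus P(m),B)$ and $c_m=c(p_m)$, else $c_m=-\infty$; (2) $\hat P(m)$ = users of $P(m)$ with cost less than $c_m$; (3) run a VCG auction whose items are the users of $\bigcup_m\hat P(m)$ and whose bidders are the advertisers (each valuing each of up to $u(a)$ items at $v(a)$) plus a dummy advertiser of value $\max_m c_m$ and capacity $\sum_m|\hat P(m)|$; (4) charge each non-dummy advertiser her VCG payment; (5) for each user $p$ assigned (to a non-dummy advertiser) by the VCG auction, pay $c_m$ to the mediator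 $m$ of $p$. *)

(* Defs.v *)
From mathcomp Require Import all_boot all_order all_algebra.
Set Implicit Arguments. Unset Strict Implicit. Unset Printing Implicit Defensive.
Import Order.TTheory GRing.Theory Num.Theory.
Local Open Scope ring_scope.

Section PriceByRemoval.
Variables (R : realFieldType) (P M A : finType).
(* c : costs of users; med p : the mediator of user p (so the sets
   P(m) = [set p | med p == m] partition P); u : capacities; v : values;
   gamma : the parameter gamma. *)
Variables (c : P -> R) (med : P -> M) (u : A -> nat) (v : A -> R) (gamma : nat).

(* Values of all slots B (advertiser a has u a slots of value v a),
   sorted by decreasing value. *)
Definition slot_vals : seq R :=
  sort (fun x y : R => y <= x) (flatten [seq nseq (u a) (v a) | a <- enum A]).

Definition sorted_users (Q : pred P) : seq P :=
  sort (fun p q => c p <= c q) [seq p <- enum P | Q p].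

(* |S_c(P', B)| : number of locations i <= min(|P'|,|B|) with v(b_i) > c(p_i). *)
Definition canon_size (Q : pred P) : nat :=
  count (fun pr : P * R => c pr.1 < pr.2) (zip (sorted_users Q) slot_vals).

(* The user at (1-indexed) location i of S_c(P', B). *)
Definition user_at (Q : pred P) (i : nat) : option P :=
  onth (sorted_users Q) i.-1.

(* Step (1): the threshold c_m; [None] encodes -infinity. *)
Definition threshold (m : M) : option R :=
  let Q := [pred p | med p != m] in
  let k := canon_size Q in
  if (4 * gamma < k)%N then omap c (user_at Q (k - 4 * gamma)) else None.

Definition lt_opt (x : R) (o : option R) : bool :=
  if o is Some y then x < y else false.

Definition hatP (m : M) : {set P} :=
  [set p | (med p == m) && lt_opt (c p) (threshold m)].

Definition items : {set P} := \bigcup_(m : M) hatP m.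

(* Value of the dummy advertiser: max_m c_m (costs are nonnegative, so the
   base value 0 is irrelevant whenever some c_m is finite; if all c_m are
   -infinity, the dummy has capacity 0). *)
Definition dummy_value : R := \big[Num.max/0]_(m : M) odflt 0 (threshold m).

(* Bidders: [Some a] for advertiser a, [None] for the dummy advertiser. *)
Definition bval (b : option A) : R := if b is Some a then v a else dummy_value.
Definition bcap (b : option A) : nat := if b is Some a then u a else #|items|.

(* An allocation maps each user to [None] (unassigned) or to a bidder. *)
Definition allocation := {ffun P -> option (option A)}.

Definition feasible (ok : pred (option A)) (x : allocation) : bool :=
  [forall p, if x p is Some b then (p \in items) && ok b else true] &&
  [forall b : option A, (#|[set p | x p == Some b]| <= bcap b)%N].

Definition welfare (x : allocation) : R :=
  \sum_(p : P) (if x p is Some b then bval b else 0).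

Definition welfare_others (a : A) (x : allocation) : R :=
  \sum_(p : P) (if x p is Some b then (if b == Some a then 0 else bval b) else 0).

Definition opt_welfare_without (a : A) : R :=
  \big[Num.max/0]_(y : allocation | feasible (fun b => b != Some a) y) welfare y.

Definition vcg_allocation (x : allocation) : Prop :=
  feasible predT x /\ forall y : allocation, feasible predT y -> welfare y <= welfare x.

Definition vcg_payment (x : allocation) (a : A) : R :=
  opt_welfare_without a - welfare_others a x.

Definition total_charged (x : allocation) : R := \sum_(a : A) vcg_payment x a.

(* Step (5): each user assigned to a non-dummy advertiser earns c_m for its
   mediator m (c_m is finite for such users). *)
Definition total_paid (x : allocation) : R :=
  \sum_(p : P | if x p is Some (Some _) then true else false)
     odflt 0 (threshold (med p)).

Definition budget_balanced (x : allocation) : Prop := total_paid x <= total_charged x.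

End PriceByRemoval.

(* Main.v *)
Require Import Defs.
From mathcomp Require Import all_boot all_order all_algebra.
From mathcomp Require Import zify.
Import Order.TTheory GRing.Theory Num.Theory.
Local Open Scope ring_scope.

Set Implicit Arguments. Unset Strict Implicit. Unset Printing Implicit Defensive.

Lemma bigmax_ge (R : realDomainType) (I : finType) (Pr : pred I) (F : I -> R) i :
  Pr i -> F i <= \big[Num.max/0]_(j | Pr j) F j.
Proof. by move=> Pi; rewrite (bigD1 i) //= le_max lexx. Qed.

Lemma bigmax_ge0 (R : realDomainType) (I : finType) (Pr : pred I) (F : I -> R) :
  0 <= \big[Num.max/0]_(j | Pr j) F j.
Proof. by apply: (big_rec (fun x => 0 <= x)) => // i x _ hx; rewrite le_max hx orbT. Qed.

Lemma bigmax_attained (R : realDomainType) (I : finType) (F : I -> R) :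
  \big[Num.max/0]_j F j = 0 \/ exists j, \big[Num.max/0]_j F j = F j.
Proof.
apply: (big_rec (fun x => x = 0 \/ exists j, x = F j)); first by left.
move=> i x _ hx; case: (leP (F i) x) => _; last by right; exists i.
done.
Qed.

Section Proofs.
Variables (R : realFieldType) (P M A : finType).
Variables (c : P -> R) (med : P -> M) (u : A -> nat) (v : A -> R) (gamma : nat).

Local Notation items := (items c med u v gamma).
Local Notation D := (dummy_value c med u v gamma).
Local Notation feasible := (feasible c med u v gamma).
Local Notation welfare := (welfare c med u v gamma).

Lemma D_ge0 : 0 <= D.
Proof. exact: bigmax_ge0. Qed.

Lemma thr_le_D m : odflt 0 (threshold c med u v gamma m) <= D.
Proof. exact: bigmax_ge. Qed.

Lemma payment_ge (x : allocation P A) a : feasible predT x ->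
  \sum_(p : P) (if x p == Some (Some a) then D else 0) <= vcg_payment c med u v gamma x a.
Proof.
move=> /andP[/forallP fx /forallP cx].
pose y : allocation P A := [ffun q => if x q == Some (Some a) then Some None else x q].
have fy : feasible (fun b => b != Some a) y.
  apply/andP; split; apply/forallP.
    move=> q; rewrite /y ffunE; have := fx q.
    case: eqP => [->|]; first by case/andP=> ->.
    by case: (x q) => // b neb /andP[-> _] /=; apply/eqP => eb; apply: neb; rewrite eb.
  case=> [a'|].
    apply: leq_trans (cx (Some a')); apply: subset_leq_card; apply/subsetP => q.
    by rewrite !inE /y ffunE; case: (x q =P Some (Some a)).
  rewrite /= ; apply: subset_leq_card; apply/subsetP => q.
  rewrite inE /y ffunE => /eqP eq; have := fx q.
  case: eqP eq => [E _|_ E]; first by rewrite E; case/andP.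
  by rewrite E; case/andP.
rewrite /vcg_payment /opt_welfare_without.
set OW := (\big[Num.max/0]_(_ | _) _).
have hOW : welfare y <= OW by apply: (@bigmax_ge _ _ _ welfare y).
move: hOW.
have -> : welfare y = welfare_others c med u v gamma a x +
     \sum_(p : P) (if x p == Some (Some a) then D else 0).
  rewrite /welfare /Defs.welfare /welfare_others -big_split /=; apply: eq_bigr => q _.
  rewrite /y ffunE; case: eqP => [->|]; first by rewrite eqxx add0r.
  move=> ne; rewrite addr0; case: (x q) ne => [b|] // ne; case: eqP => // eb; by case: ne; rewrite eb.
by rewrite lerBrDl.
Qed.

Lemma budget (x : allocation P A) : feasible predT x ->
  budget_balanced c med u v gamma x.
Proof.
move=> fx; rewrite /budget_balanced /total_charged /total_paid.
apply: le_trans (ler_sum _ (fun a _ => payment_ge a fx)).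
rewrite exchange_big /= big_mkcond /=; apply: ler_sum => p _.
case E: (x p) => [[a0|]|]; last 2 first.
- by rewrite big1 // => a _; rewrite E.
- by rewrite big1 // => a _; rewrite E.
rewrite (bigD1 a0) //= eqxx big1 ?addr0; first exact: thr_le_D.
by move=> a ne; case: eqP => // -[ea]; rewrite ea eqxx in ne.
Qed.

Lemma core m t :
  (#|[set p | med p == m]| <= gamma)%N ->
  threshold c med u v gamma m = Some t ->
  (#|[set q | (c q < t)%R]| < \sum_(a | (t < v a)%R) u a)%N.
Proof.
move=> hm.
rewrite /threshold.
set Q := [pred p | med p != m].
set k := canon_size c u v Q.
case: ifP => // hk.
rewrite /user_at.
set s := sorted_users c Q.
set j' := (k - 4 * gamma).-1.
case E: (onth s j') => [p0|] //= [ht].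
have hj : (j' < size s)%N.
  by rewrite ltnNge; apply/negP => /onth_default; rewrite E.
have hp0 : nth p0 s j' = p0 by apply: onth_nth.
have ss : sorted (fun p q => c p <= c q) s.
  by apply: sort_sorted => p q; apply: le_total.
have mono : {in [pred n | (n < size s)%N] &,
    {homo nth p0 s : i j / (i <= j)%N >-> c i <= c j}}.
  by apply: sorted_leq_nth; [move=> y x z h1 h2; exact: le_trans h1 h2|move=> p; exact: lexx|exact: ss].
set sv := slot_vals u v.
have ssv : sorted (fun x y : R => y <= x) sv.
  by apply: sort_sorted => x y; apply: le_total.
have monov : {in [pred n | (n < size sv)%N] &,
    {homo nth 0 sv : i j / (i <= j)%N >-> j <= i}}.
  by apply: sorted_leq_nth; [move=> y x z h1 h2; exact: le_trans h2 h1|move=> p; exact: lexx|exact: ssv].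
have partA : (#|[set q | (c q < t)%R]| <= j' + gamma)%N.
  have sub : [set q | (c q < t)%R] \subset [set q in take j' s] :|: [set q | med q == m].
    apply/subsetP => q; rewrite !inE => hq.
    case: eqP => [_|/eqP nm]; first by rewrite orbT.
    have qs : q \in s by rewrite mem_sort mem_filter mem_enum andbT.
    apply/orP; left; rewrite in_take // ltnNge; apply/negP => hi.
    have := mono j' (index q s); rewrite !inE hj index_mem qs => /(_ isT isT hi).
    by rewrite nth_index // hp0 ht leNgt hq.
  apply: leq_trans (subset_leq_card sub) _; apply: leq_trans (leq_card_setU _ _) _.
  apply: leq_add => //; rewrite cardsE; apply: leq_trans (card_size _) _.
  by rewrite size_take; case: ifP => //= /negbT; rewrite -leqNgt => h; apply: leq_trans h _.
set z := zip s sv.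
have hkz : (k <= size z)%N by apply: count_size.
have hkm : (k <= minn (size s) (size sv))%N by move: hkz; rewrite /z size_zip.
have hk0 : (0 < k)%N by apply: leq_ltn_trans hk.
have hjk : (j' <= k.-1)%N by rewrite /j'; lia.
have szs : (size z <= size s)%N by rewrite size_zip geq_minl.
have szv : (size z <= size sv)%N by rewrite size_zip geq_minr.
have key : t < nth 0 sv k.-1.
  rewrite ltNge; apply/negP => hle.
  have : (k <= k.-1)%N.
    rewrite {1}/k /canon_size -/s -/sv -/z -(cat_take_drop k.-1 z) count_cat.
    have -> : count (fun pr : P * R => c pr.1 < pr.2) (drop k.-1 z) = 0%N.
      apply/eqP; rewrite -leqn0 leqNgt -has_count; apply/hasP => -[[q r]].
      move=> /(nthP (p0, 0)) [i]; rewrite size_drop nth_drop => hi.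
      have hi' : (k.-1 + i < minn (size s) (size sv))%N.
        by move: hi; rewrite ltn_subRL /z size_zip.
      rewrite nth_zip_cond ifT; last by move: hi; rewrite ltn_subRL.
      case=> <- <- /=; rewrite ltNge => /negP; apply.
      apply: (@le_trans _ _ (nth 0 sv k.-1)).
        apply: monov; rewrite ?inE; lia.
      apply: le_trans hle _; rewrite -ht; have := mono j' (k.-1 + i); rewrite hp0; apply; rewrite ?inE; lia.
    rewrite addn0; apply: leq_trans (count_size _ _) _.
    by rewrite size_take; case: ifP => // /negbT; lia.
  lia.
have cnt : (k <= count (fun r => (t < r)%R) sv)%N.
  rewrite -(cat_take_drop k sv) count_cat.
  have -> : count (fun r => (t < r)%R) (take k sv) = k.
    have /eqP -> : count (fun r => (t < r)%R) (take k sv) == size (take k sv).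
      rewrite -all_count; apply/allP => r /(nthP 0) [i hi <-].
      rewrite size_take in hi; rewrite nth_take; last by move: hi; case: ifP; lia.
      apply: lt_le_trans key _; apply: monov; rewrite ?inE; move: hi; case: ifP; lia.
    by rewrite size_take; case: ifP => //; lia.
  exact: leq_addr.
have cntE : count (fun r => (t < r)%R) sv = (\sum_(a | (t < v a)%R) u a)%N.
  rewrite /sv /slot_vals.
  have /permP -> := permEl (perm_sort (fun x y : R => y <= x)
      (flatten [seq nseq (u a) (v a) | a <- enum A])).
  rewrite count_flatten sumnE !big_map -enumT big_enum /= [RHS]big_mkcond /=.
  by apply: eq_bigr => a _; rewrite count_nseq /=; case: (t < v a); rewrite ?mul1n ?mul0n.
rewrite -cntE; apply: leq_trans cnt; apply: leq_ltn_trans partA _.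
rewrite /j'; lia.
Qed.

Lemma card_as_sum (F : pred P) : #|[set q | F q]| = (\sum_q (F q : nat))%N.
Proof.
rewrite -sum1_card big_mkcond /=; apply: eq_bigr => q _; rewrite inE; by case: (F q).
Qed.

Lemma sum_cnt (x : allocation P A) (H : pred A) p :
  feasible predT x -> p \in items -> (forall a, x p != Some (Some a)) ->
  (\sum_(a | H a) #|[set q | x q == Some (Some a)]| < #|items|)%N.
Proof.
move=> /andP[/forallP fx1 _] hp hnot.
rewrite (cardsD1 p items) hp add1n ltnS card_as_sum.
under eq_bigr => a _ do rewrite card_as_sum.
rewrite exchange_big /=; apply: leq_sum => q _; rewrite inE.
case Eq: (x q) => [[a1|]|]; last 2 first.
- by rewrite big1 // => a _; rewrite Eq.
- by rewrite big1 // => a _; rewrite Eq.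
have := fx1 q; rewrite Eq => /andP[-> _].
have -> : (q != p) by apply/eqP => qp; move: (hnot a1); rewrite -qp Eq eqxx.
rewrite /=; apply: leq_trans (_ : \sum_a (Some (Some a1) == Some (Some a) : nat) <= 1)%N.
  by rewrite big_mkcond /=; apply: leq_sum => a _; case: (H a).
rewrite (bigD1 a1) //= eqxx big1 // => a ne; case: eqP => // -[e]; by rewrite e eqxx in ne.
Qed.

Lemma assigned (x : allocation P A) :
  (forall m, #|[set p | med p == m]| <= gamma)%N ->
  (forall p, 0 <= c p) ->
  vcg_allocation c med u v gamma x ->
  forall p, p \in items -> exists a : A, x p = Some (Some a).
Proof.
move=> hm c0 [fx opt] p hp.
have hbig : (#|items| < \sum_(a | (D < v a)%R) u a)%N.
  move: (hp); rewrite /Defs.items => /bigcupP [m0 _]; rewrite inE => /andP[_].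
  case E0: (threshold c med u v gamma m0) => [t0|] //= hct0.
  have t0D : t0 <= D by have := thr_le_D m0; rewrite E0.
  have Dpos : 0 < D by apply: le_lt_trans (c0 p) (lt_le_trans hct0 t0D).
  have [D0|[ms Dms]] := bigmax_attained (fun m => odflt 0 (threshold c med u v gamma m)).
    by move: Dpos; rewrite /dummy_value D0 ltxx.
  move: Dms; rewrite -/(dummy_value c med u v gamma).
  case Es: (threshold c med u v gamma ms) => [t|] /= Dt; last by move: Dpos; rewrite Dt ltxx.
  have := core (hm ms) Es; rewrite -Dt; apply: leq_ltn_trans.
  apply: subset_leq_card; apply/subsetP => q /bigcupP [m _]; rewrite !inE => /andP[_].
  have := thr_le_D m.
  by case: (threshold c med u v gamma m) => [tm|] //= tmD hq; apply: lt_le_trans hq tmD.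
case: (boolP [exists a, x p == Some (Some a)]) => [/existsP [a /eqP]|/existsPn hnot].
  by exists a.
exfalso.
have hs := sum_cnt (fun a => (D < v a)%R) fx hp hnot.
case: (boolP [exists a, (D < v a)%R && (#|[set q | x q == Some (Some a)]| < u a)%N]) =>
   [/existsP [a /andP[Ha ca]]|/existsPn hn]; last first.
  have h : (\sum_(a | (D < v a)%R) u a <=
            \sum_(a | (D < v a)%R) #|[set q | x q == Some (Some a)]|)%N.
    by apply: leq_sum => a Ha; have := hn a; rewrite Ha /= -leqNgt.
  by have := ltn_trans (leq_ltn_trans h hs) hbig; rewrite ltnn.
pose y : allocation P A := [ffun q => if q == p then Some (Some a) else x q].
have fy : feasible predT y.
  move: (fx) => /andP[/forallP fx1 /forallP cx].
  apply/andP; split; apply/forallP.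
    move=> q; rewrite /y ffunE; case: eqP => [->|_]; first by rewrite hp.
    exact: fx1.
  move=> b.
  have sub : [set q | y q == Some b] \subset p |: [set q | x q == Some b].
    by apply/subsetP => q; rewrite !inE /y ffunE; case: (q =P p).
  case: (b =P Some a) sub => [->|nb] sub.
    apply: leq_trans (subset_leq_card sub) _; rewrite cardsU1.
    by apply: leq_trans (leq_add (leq_b1 _) (leqnn _)) _; rewrite add1n.
  apply: leq_trans (cx b); apply: subset_leq_card; apply/subsetP => q.
  rewrite !inE /y ffunE; case: (q =P p) => // _ /eqP [e].
  by exfalso; apply: nb; rewrite -e.
have := opt y fy.
rewrite /Defs.welfare (bigD1 p) //= [X in (_ <= X)%R](bigD1 p) //=.
rewrite {1}/y ffunE eqxx /=.
have -> : \sum_(i | i != p) (if y i is Some b then bval c med u v gamma b else 0) =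
          \sum_(i | i != p) (if x i is Some b then bval c med u v gamma b else 0).
  by apply: eq_bigr => q qp; rewrite /y ffunE (negbTE qp).
rewrite lerD2r.
have D0 := D_ge0.
case Exp: (x p) => [[a1|]|].
- by move: (hnot a1); rewrite Exp eqxx.
- by rewrite /= leNgt Ha.
- by rewrite leNgt (le_lt_trans D0 Ha).
Qed.
End Proofs.
Theorem corollary7 (R : realFieldType) (P M A : finType)
    (c : P -> R) (med : P -> M) (u : A -> nat) (v : A -> R) (gamma : nat) :
  (1 <= gamma)%N ->
  (forall a, 0 < u a)%N ->
  (forall a, u a <= gamma)%N ->
  (forall m, #|[set p | med p == m]| <= gamma)%N ->
  (forall p, 0 <= c p) ->
  (forall a, 0 <= v a) ->
  injective c -> injective v -> (forall a p, v a != c p) ->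
  forall x : allocation P A,
    vcg_allocation c med u v gamma x ->
    budget_balanced c med u v gamma x /\
    (forall p, p \in items c med u v gamma ->
       exists a : A, x p = Some (Some a)).
Proof.
move=> _ _ _ hm c0 _ _ _ _ x hx; split.
  by apply: budget; case: hx.
exact: assigned hm c0 hx.
Qed.
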